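(* Let $\omega\in\Omega^q(\log\mathscr{X}/\mathscr{C})$ and $\theta\in\mathrm{Der}(-\log\mathscr{X})$. Then the contraction $\langle\omega,\theta\rangle$ belongs to $\Omega^{q-1}(\log\mathscr{X}/\mathscr{C})$.
   Context: $V=\mathbb{C}^\ell$, $S=\mathbb{C}[x_1,\dots,x_\ell]$, $\Omega^q$ the module of polynomial $q$-forms. $\mathscr{X}$ is a central equidimensional subspace arrangement of codimension $k$ (finite set of linear subspaces of codimension $k$) with radical ideal $\mathcal{I}_\mathscr{X}$; $\mathscr{C}\supseteq\mathscr{X}$ is a reduced complete intersection subspace arrangement of codimension $k$ with $\mathcal{I}_\mathscr{C}=(h_1,\dots,h_k)$ radical, $h_1,\dots,h_k\in\mathcal{I}_\mathscr{X}$ a homogeneous regular sequence, $h=h_1\cdots h_k$. $\Omega^q(\log\mathscr{X}/\mathscr{C})=\{\omega\in\frac1h\Omega^q:\ \mathcal{I}_\mathscr{X}\omega\subseteq\frac1h\mathcal{I}_\mathscr{C}\Omega^q,\ d(\mathcal{I}_\mathscr{X})\wedge\omega\subseteq\frac1h\mathcal{I}_\mathscr{C}\Omega^{q+1}\}$. $\mathrm{Der}(-\log\mathscr{X})=\{\delta$ polynomial vector field : $\delta(\mathcal{I}_\mathscr{X})\subseteq\mathcal{I}_\mathscr{X}\}$. *)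

(* Defs.v *)
From HB Require Import structures.
From mathcomp Require Import all_boot all_order all_algebra.
From mathcomp Require Import reals.
From mathcomp Require Import complex.
From mathcomp Require Import mpoly fraction.
Set Implicit Arguments. Unset Strict Implicit. Unset Printing Implicit Defensive.
Import Order.TTheory GRing.Theory Num.Theory.
Local Open Scope ring_scope.

Notation "x %:F" := (@FracField.tofrac _ x) : ring_scope.

(* A form is given by its coefficients w I in front of dx_I, where
   I ranges over subsets of 'I_n (dx_I = dx_{i1} /\ ... /\ dx_{iq},
   i1 < ... < iq).                                                         *)
Definition dform (K : Type) (n : nat) := {set 'I_n} -> K.

Section Forms.
Variables (K : comNzRingType) (n : nat).

(* sign (-1)^{#{j in J | j < i}}: dx_i /\ dx_J = sgnf i J dx_{J u {i}}
   for i \notin J; also the sign of the contraction term.                 *)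
Definition sgnf (i : 'I_n) (J : {set 'I_n}) : K :=
  (-1) ^+ #|[set j in J | (j < i)%N]|.

Definition is_qform (q : nat) (w : dform K n) : Prop :=
  forall I : {set 'I_n}, #|I| != q -> w I = 0.

(* contraction <w, theta> of a form with the vector field
   theta = sum_i theta_i d/dx_i                                           *)
Definition contract (w : dform K n) (th : 'I_n -> K) : dform K n :=
  fun J => \sum_(i | i \notin J) sgnf i J * th i * w (i |: J).

(* (sum_i a_i dx_i) /\ w                                                   *)
Definition wedge1 (a : 'I_n -> K) (w : dform K n) : dform K n :=
  fun I => \sum_(i in I) sgnf i (I :\ i) * a i * w (I :\ i).

End Forms.

Section Arrangements.
Variables (R : realType) (n : nat).
Local Notation C := (R[i]).
Local Notation poly := {mpoly C[n]}.
Local Notation ratf := {fraction {mpoly C[n]}}.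

(* a linear subspace of C^n is the row space of a matrix V;
   it has codimension k                                                    *)
Definition subspace_codim (k : nat) (V : 'M[C]_n) : Prop :=
  \rank V = (n - k)%N.

Definition vanishing_ideal (X : seq 'M[C]_n) (f : poly) : Prop :=
  forall V, V \in X -> forall x : 'rV[C]_n, (x <= V)%MS ->
    f.@[fun j => x 0 j] = 0.

Definition radical_ideal (P : poly -> Prop) : Prop :=
  forall (f : poly) (m : nat), P (f ^+ m.+1) -> P f.

Definition gen_ideal (k : nat) (hs : 'I_k -> poly) (P : pred 'I_k) (f : poly)
  : Prop := exists g : 'I_k -> poly, f = \sum_(j | P j) g j * hs j.

Definition homogeneous (p : poly) : Prop :=
  exists d : nat, p \is ishomog1 d mdeg.

Definition regular_seq (k : nat) (hs : 'I_k -> poly) : Prop :=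
  ~ gen_ideal hs predT 1 /\
  forall (i : 'I_k) (g : poly),
    gen_ideal hs (fun j => (j < i)%N) (g * hs i) ->
    gen_ideal hs (fun j => (j < i)%N) g.

(* w \in (1/h) M Omega^q, where M is an ideal of S (M = S for Omega^q):
   w = eta / h with eta a polynomial q-form with coefficients in M       *)
Definition scaled_forms (h : poly) (M : poly -> Prop) (q : nat)
  (w : dform ratf n) : Prop :=
  exists eta : dform poly n,
    is_qform q eta /\ (forall I, M (eta I)) /\
    forall I, w I = (eta I)%:F / h%:F.

Definition log_forms (IX IC : poly -> Prop) (h : poly) (q : nat)
  (w : dform ratf n) : Prop :=
  [/\ scaled_forms h (fun _ => True) q w,
      (forall f, IX f -> scaled_forms h IC q (fun I => f%:F * w I)) &
      (forall f, IX f ->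
         scaled_forms h IC q.+1 (wedge1 (fun j => (mderiv j f)%:F) w))].

Definition der_log (IX : poly -> Prop) (th : 'I_n -> poly) : Prop :=
  forall f, IX f -> IX (\sum_j th j * mderiv j f).

End Arrangements.

(* Main.v *)
Require Import Defs.
From HB Require Import structures.
From mathcomp Require Import all_boot all_order all_algebra.
From mathcomp Require Import reals.
From mathcomp Require Import complex.
From mathcomp Require Import mpoly fraction.
From mathcomp Require Import ring.
Import Order.TTheory GRing.Theory Num.Theory.
Local Open Scope ring_scope.

Section Gen.
Variables (K : comNzRingType) (n : nat).

Lemma sgnfU (i j : 'I_n) (A : {set 'I_n}) : i \notin A ->
  sgnf K j (i |: A) = (if (i < j)%N then -1 else 1) * sgnf K j A.
Proof.
move=> iA; rewrite /sgnf.
have -> : [set x in i |: A | (x < j)%N] =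
   if (i < j)%N then i |: [set x in A | (x < j)%N] else [set x in A | (x < j)%N].
  apply/setP => x; case: ifP => ij; rewrite !inE; case: (eqVneq x i) => [->|] /=; rewrite ?ij ?andbF //.
case: ifP => _; last by rewrite mul1r.
by rewrite cardsU1 inE (negbTE iA) /= exprS.
Qed.

Lemma sgnf2 (i : 'I_n) A : sgnf K i A * sgnf K i A = 1.
Proof. by rewrite /sgnf -exprMn mulrN1 opprK expr1n. Qed.

Lemma setD1U1 (i j : 'I_n) (I : {set 'I_n}) : j != i ->
  (j |: I) :\ i = j |: (I :\ i).
Proof.
move=> ne; apply/setP => x; rewrite !inE.
by case: (eqVneq x j) => [->|]; rewrite ?ne.
Qed.

Lemma wedge_contract (a th : 'I_n -> K) (w : dform K n) I :
  wedge1 a (contract w th) I + contract (wedge1 a w) th I =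
  (\sum_j th j * a j) * w I.
Proof.
rewrite /wedge1 /contract.
have HA : forall i, i \in I ->
  \sum_(j | j \notin I :\ i) sgnf K j (I :\ i) * th j * w (j |: (I :\ i)) =
  sgnf K i (I :\ i) * th i * w I +
  \sum_(j | j \notin I) sgnf K j (I :\ i) * th j * w (j |: (I :\ i)).
  move=> i Hi; rewrite (bigD1 i) /=; last by rewrite setD11.
  rewrite setD1K //; congr (_ + _); apply: eq_bigl => j.
  rewrite in_setD1; case: (eqVneq j i) => [->|_] /=; by rewrite ?Hi ?andbT.
have HB : forall j, j \notin I ->
  \sum_(i in j |: I) sgnf K i ((j |: I) :\ i) * a i * w ((j |: I) :\ i) =
  sgnf K j I * a j * w I +
  \sum_(i in I) sgnf K i ((j |: I) :\ i) * a i * w ((j |: I) :\ i).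
  move=> j Hj; rewrite (bigD1 j) /=; last by rewrite setU11.
  rewrite setU1K //; congr (_ + _); apply: eq_bigl => i.
  rewrite in_setU1; case: (eqVneq i j) => [->|_] /=; first by rewrite (negbTE Hj).
  by rewrite andbT.
rewrite (eq_bigr _ (fun i Hi => congr1 _ (HA i Hi))).
rewrite (eq_bigr _ (fun j Hj => congr1 _ (HB j Hj))).
under eq_bigr do rewrite mulrDr.
under [X in _ + X]eq_bigr do rewrite mulrDr.
rewrite !big_split /=.
rewrite (bigID (mem I) predT) /= mulrDl !mulr_suml.
set S1 := \sum_(i in I) _ * (_ * _ * w I).
set S2 := \sum_(j | j \notin I) _ * (_ * _ * w I).
have -> : S1 = \sum_(i in I) th i * a i * w I.
  by apply: eq_bigr => i _; rewrite -[RHS]mul1r -(sgnf2 i (I :\ i)); ring.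
have -> : S2 = \sum_(j | j \notin I) th j * a j * w I.
  by apply: eq_bigr => j _; rewrite -[RHS]mul1r -(sgnf2 j I); ring.
rewrite [LHS]addrACA -[RHS]addr0; congr (_ + _).
under [X in _ + X]eq_bigr do rewrite mulr_sumr.
under eq_bigr do rewrite mulr_sumr.
rewrite [X in _ + X]exchange_big /= -big_split big1 // => i Hi.
rewrite -big_split big1 // => j Hj /=.
have ne : j != i by apply: contraNneq Hj => ->.
rewrite setD1U1 //.
have -> : sgnf K j I = (if (i < j)%N then -1 else 1) * sgnf K j (I :\ i).
  by rewrite -{1}(setD1K Hi) sgnfU // setD11.
rewrite sgnfU; last by rewrite in_setD1 negb_and Hj orbT.
case: (ltngtP i j) => h; try ring.
by move: ne; rewrite -val_eqE /= h eqxx.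
Qed.
End Gen.

Set Implicit Arguments.
Section Arr.
Variables (R : realType) (n : nat).
Local Notation poly := {mpoly R[i][n]}.
Local Notation ratf := {fraction {mpoly R[i][n]}}.

Lemma qform_contract (K : comNzRingType) q (w : dform K n) th :
  is_qform q w -> is_qform q.-1 (contract w th).
Proof.
move=> Hw J HJ; rewrite /contract big1 // => i Hi; rewrite Hw ?mulr0 //.
by case: q Hw HJ => [|q] Hw HJ; rewrite cardsU1 Hi // add1n eqSS.
Qed.

Lemma scaled_ext (h : poly) M q (w1 w2 : dform ratf n) :
  (forall I, w1 I = w2 I) -> scaled_forms h M q w1 -> scaled_forms h M q w2.
Proof.
move=> E [eta [H1 [H2 H3]]]; exists eta; split => //; split => // I.
by rewrite -E.
Qed.

Lemma scaled_contract (h : poly) (M : poly -> Prop) q (w : dform ratf n)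
  (th : 'I_n -> poly) :
  M 0 -> (forall a b, M a -> M b -> M (a + b)) ->
  (forall p a, M a -> M (p * a)) ->
  scaled_forms h M q w ->
  scaled_forms h M q.-1 (contract w (fun j => (th j)%:F)).
Proof.
move=> M0 MD MM [eta [Hq [HM He]]]; exists (contract eta th); split.
  exact: qform_contract.
split.
  move=> J; rewrite /contract; apply: big_ind => // i _; exact: MM.
move=> J; rewrite /contract rmorph_sum mulr_suml; apply: eq_bigr => i _.
by rewrite He !rmorphM /= /sgnf rmorphXn rmorphN1 mulrA.
Qed.

Lemma scaled_sub (h : poly) (M : poly -> Prop) q (w1 w2 : dform ratf n) :
  (forall a b, M a -> M b -> M (a - b)) ->
  scaled_forms h M q w1 -> scaled_forms h M q w2 ->
  scaled_forms h M q (fun I => w1 I - w2 I).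
Proof.
move=> MB [e1 [Q1 [M1 E1]]] [e2 [Q2 [M2 E2]]].
exists (fun I => e1 I - e2 I); split.
  by move=> I HI; rewrite Q1 ?Q2 ?subr0.
split; first by move=> I; apply: MB.
by move=> I; rewrite E1 E2 rmorphB mulrBl.
Qed.

Lemma vi0 (X : seq 'M[R[i]]_n) : vanishing_ideal X 0.
Proof. by move=> V _ x _; rewrite meval0. Qed.

Lemma viD (X : seq 'M[R[i]]_n) a b :
  vanishing_ideal X a -> vanishing_ideal X b -> vanishing_ideal X (a + b).
Proof. by move=> Ha Hb V HV x Hx; rewrite mevalD (Ha V HV x Hx) (Hb V HV x Hx) addr0. Qed.

Lemma viB (X : seq 'M[R[i]]_n) a b :
  vanishing_ideal X a -> vanishing_ideal X b -> vanishing_ideal X (a - b).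
Proof. by move=> Ha Hb V HV x Hx; rewrite mevalB (Ha V HV x Hx) (Hb V HV x Hx) subr0. Qed.

Lemma viM (X : seq 'M[R[i]]_n) p a :
  vanishing_ideal X a -> vanishing_ideal X (p * a).
Proof. by move=> Ha V HV x Hx; rewrite mevalM (Ha V HV x Hx) mulr0. Qed.

End Arr.

Theorem lemma3p7 (R : realType) (n k : nat)
  (X CC : seq 'M[R[i]]_n) (hs : 'I_k -> {mpoly R[i][n]})
  (q : nat) (w : dform {fraction {mpoly R[i][n]}} n)
  (th : 'I_n -> {mpoly R[i][n]}) :
  (forall V, V \in X -> subspace_codim k V) ->
  (forall V, V \in CC -> subspace_codim k V) ->
  (forall V, V \in X -> exists2 W, W \in CC & (V == W)%MS) ->
  (forall f, vanishing_ideal CC f <-> gen_ideal hs predT f) ->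
  radical_ideal (vanishing_ideal CC) ->
  (forall j, vanishing_ideal X (hs j)) ->
  (forall j, homogeneous (hs j)) ->
  regular_seq hs ->
  log_forms (vanishing_ideal X) (vanishing_ideal CC) (\prod_j hs j) q w ->
  der_log (vanishing_ideal X) th ->
  log_forms (vanishing_ideal X) (vanishing_ideal CC) (\prod_j hs j) q.-1
    (contract w (fun j => (th j)%:F)).
Proof.
move=> _ _ _ _ _ _ _ _ [H1 H2 H3] Hth.
have Ci := @vi0 R n CC; have CD := @viD R n CC; have CM := @viM R n CC.
split.
- by apply: scaled_contract H1.
- move=> f Hf; apply: scaled_ext (scaled_contract th Ci CD CM (H2 f Hf)).
  move=> J; rewrite /contract mulr_sumr; apply: eq_bigr => i _.
  by rewrite mulrCA.
- move=> f Hf; case: q H1 H2 H3 => [|q] H1 H2 H3.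
  + have W0 : forall K : {set 'I_n}, #|K| != 0%N -> w K = 0.
      case: H1 => eta [Hq [_ He]] K HK.
      by rewrite He Hq // rmorph0 mul0r.
    exists (fun _ => 0); split; first by [].
    split; first by move=> _; apply: Ci.
    move=> I; rewrite rmorph0 mul0r /wedge1 big1 // => i _.
    rewrite /contract big1 ?mulr0 // => j Hj.
    by rewrite W0 ?mulr0 // cardsU1 Hj.
  + set g := \sum_j th j * mderiv j f.
    have A := H2 g (Hth f Hf).
    have B := scaled_contract th Ci CD CM (H3 f Hf).
    have C := scaled_sub (@viB R n CC) A B.
    apply: scaled_ext C => I /=.
    apply/eqP; rewrite subr_eq wedge_contract; apply/eqP; congr (_ * _).
    by rewrite /g rmorph_sum; apply: eq_bigr => j _; rewrite rmorphM.
Qed.
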